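(* Let $X,Y$ be Banach spaces and $\|\cdot\|$ a norm on $X\oplus Y$, with dual norm (also denoted $\|\cdot\|$) on $X^*\oplus Y^*$. Let $x^*\in X^*$, $y^*\in Y^*$ be such that (i) $1=\|x^*\|=\|x^*+y^*\|$; (ii) the partial Fréchet differential $\partial/\partial x^*$ of the dual norm exists at $x^*$ (i.e., the map $X^*\ni u^*\mapsto\|u^*\|$ is Fréchet differentiable at $x^*$); (iii) the partial Fréchet differential $\partial/\partial y^*$ of the dual norm at $x^*+y^*$ exists and equals $0$ (i.e., the map $Y^*\ni v^*\mapsto\|x^*+v^*\|$ is Fréchet differentiable at $y^*$ with derivative $0$). Then the dual norm is Fréchet differentiable at $x^*+y^*$.
   Context: The dual of $X\oplus Y$ is identified with $X^*\oplus Y^*$ via $(x^*+y^* )(x+y)=x^*(x)+y^*(y)$. *)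

(* Defs.v *)
From HB Require Import structures.
From mathcomp Require Import all_boot all_order all_algebra.
From mathcomp Require Import all_classical all_reals all_analysis.
Set Implicit Arguments. Unset Strict Implicit. Unset Printing Implicit Defensive.
Import Order.TTheory GRing.Theory Num.Theory.
Import numFieldNormedType.Exports.
Local Open Scope classical_set_scope.
Local Open Scope ring_scope.

Section Defs.
Variable R : realType.

Definition is_dual (E : normedModType R) (f : E -> R) : Prop :=
  (forall (a : R) (u v : E), f (a *: u + v) = a * f u + f v) /\ continuous f.

(* N is a norm on the product X (+) Y, equivalent to the product topology
   (so that the dual of (X (+) Y, N) is X^* (+) Y^* ). *)
Definition is_sum_norm (X Y : normedModType R) (N : X -> Y -> R) : Prop :=
  [/\ (forall x y, N x y = 0 -> (x = 0) /\ (y = 0)),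
      (forall (a : R) x y, N (a *: x) (a *: y) = `|a| * N x y),
      (forall x y x' y', N (x + x') (y + y') <= N x y + N x' y') &
      (exists c C : R, [/\ 0 < c, 0 < C &
        forall x y, c * Num.max `|x| `|y| <= N x y /\
                    N x y <= C * Num.max `|x| `|y| ])].

Definition dual_norm (X Y : normedModType R) (N : X -> Y -> R)
  (f : X -> R) (g : Y -> R) : R :=
  sup [set r : R | exists x y, N x y <= 1 /\ r = `|f x + g y| ].

Definition fadd (E : Type) (f g : E -> R) : E -> R := fun x => f x + g x.
Definition fscale (E : Type) (a : R) (f : E -> R) : E -> R := fun x => a * f x.
Definition fzero (E : Type) : E -> R := fun _ => 0.

Definition frechet_deriv (V : Type) (S : V -> Prop) (add : V -> V -> V)
  (scale : R -> V -> V) (nv : V -> R) (F : V -> R) (p : V) (L : V -> R)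
  : Prop :=
  [/\ (forall (a : R) h k, S h -> S k -> L (add (scale a h) k) = a * L h + L k),
      (exists K : R, forall h, S h -> `|L h| <= K * nv h) &
      (forall eps : R, 0 < eps -> exists delta : R, 0 < delta /\
         forall h, S h -> nv h < delta ->
           `|F (add p h) - F p - L h| <= eps * nv h)].

Definition frechet_diff (V : Type) (S : V -> Prop) (add : V -> V -> V)
  (scale : R -> V -> V) (nv : V -> R) (F : V -> R) (p : V) : Prop :=
  exists L, frechet_deriv S add scale nv F p L.

End Defs.

(* Main.v *)
Require Import Defs.
From HB Require Import structures.
From mathcomp Require Import all_boot all_order all_algebra.
From mathcomp Require Import all_classical all_reals all_analysis.
From mathcomp Require Import ring lra.
Import Order.TTheory GRing.Theory Num.Theory.
Import numFieldNormedType.Exports.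
Local Open Scope classical_set_scope.
Local Open Scope ring_scope.
Set Implicit Arguments. Unset Strict Implicit. Unset Printing Implicit Defensive.

Section Aux.
Variable R : realType.

Lemma dual0 (E : normedModType R) (f : E -> R) : is_dual f -> f 0 = 0.
Proof.
move=> [Hl _]; have := Hl (-1) 0 0.
rewrite scaleN1r oppr0 addr0 mulN1r => H; lra.
Qed.

Lemma dualZ (E : normedModType R) (f : E -> R) a u : is_dual f -> f (a *: u) = a * f u.
Proof. move=> Hf; have := (Hf.1 a u 0); rewrite addr0 dual0 // addr0 //. Qed.

Lemma dual_bounded (E : normedModType R) (f : E -> R) : is_dual f ->
  exists M, 0 <= M /\ forall x, `|f x| <= M * `|x|.
Proof.
move=> Hf; have Hc := Hf.2 0.
move: Hc => /cvgr_dist_lt/(_ 1 ltr01).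
move/nbhs_norm0P => [e /= e0 He].
exists (2 / e); split; first by rewrite divr_ge0 // ltW.
move=> x; have [->|x0] := eqVneq x 0.
  by rewrite dual0 // !normr0 mulr0.
have nx : 0 < `|x| by rewrite normr_gt0.
pose s := (e / 2) / `|x|.
have s0 : 0 < s by rewrite /s divr_gt0 // divr_gt0.
have : `|s *: x| < e.
  rewrite normrZ gtr0_norm // /s divfK ?gt_eqF //.
  lra.
move/He; rewrite dual0 // sub0r normrN dualZ // normrM gtr0_norm // => H.
have H2 : `|f x| < s^-1 by rewrite -(ltr_pM2l s0) mulfV ?gt_eqF.
apply: ltW; apply: (lt_le_trans H2).
rewrite /s invfM invrK.
have -> : (e / 2)^-1 = 2 / e by rewrite invfM invrK mulrC.
by rewrite mulrC.
Qed.

Lemma dual_fzero (E : normedModType R) : is_dual (@fzero R E).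
Proof. by split; [move=> *; rewrite /fzero mulr0 addr0|exact: cst_continuous]. Qed.

Lemma dual_fadd (E : normedModType R) (f g : E -> R) :
  is_dual f -> is_dual g -> is_dual (fadd f g).
Proof.
move=> [Hf Cf] [Hg Cg]; split.
  by move=> a u v; rewrite /fadd Hf Hg; ring.
by move=> x; apply: continuousD; [exact: Cf|exact: Cg].
Qed.

Lemma dual_fscale (E : normedModType R) a (f : E -> R) :
  is_dual f -> is_dual (fscale a f).
Proof.
move=> [Hf Cf]; split.
  by move=> b u v; rewrite /fscale Hf; ring.
by move=> x; apply: continuousM; [exact: cst_continuous|exact: Cf].
Qed.

Variables (X Y : normedModType R) (N : X -> Y -> R).
Hypothesis HN : is_sum_norm N.

Lemma N00 : N 0 0 = 0.
Proof.
case: HN => _ HZ _ _; have := HZ 0 0 0; rewrite !scale0r normr0 mul0r //.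
Qed.


Definition DNset (f : X -> R) (g : Y -> R) :=
  [set r : R | exists x y, N x y <= 1 /\ r = `|f x + g y| ].

Lemma DNset_sup f g : is_dual f -> is_dual g -> has_sup (DNset f g).
Proof.
move=> Hf Hg; split.
  exists 0, 0, 0; rewrite N00 ler01 dual0 // dual0 // addr0 normr0; split=> //.
have [Mf [Mf0 HMf]] := dual_bounded Hf.
have [Mg [Mg0 HMg]] := dual_bounded Hg.
case: HN => _ _ _ [c [C [c0 C0 Hc]]].
exists ((Mf + Mg) / c) => r [x [y [Hxy ->]]].
have [H1 _] := Hc x y.
have hm : Num.max `|x| `|y| <= c^-1.
  by rewrite -(ler_pM2l c0) mulfV ?gt_eqF //; apply: le_trans Hxy.
have hx : `|x| <= c^-1 by apply: le_trans hm; rewrite le_max lexx.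
have hy : `|y| <= c^-1 by apply: le_trans hm; rewrite le_max lexx orbT.
apply: (le_trans (ler_normD _ _)).
apply: (le_trans (lerD (HMf x) (HMg y))).
rewrite mulrDl; apply: lerD; by apply: ler_wpM2l.
Qed.

Lemma DN_ub f g x y : is_dual f -> is_dual g -> N x y <= 1 ->
  `|f x + g y| <= dual_norm N f g.
Proof.
move=> Hf Hg Hxy; have [_ Hs] := DNset_sup Hf Hg.
by apply: (ub_le_sup Hs); exists x, y.
Qed.

Lemma DN_ge0 f g : is_dual f -> is_dual g -> 0 <= dual_norm N f g.
Proof.
move=> Hf Hg; have H0 : N 0 0 <= 1 by rewrite N00 ler01.
exact: le_trans (normr_ge0 _) (DN_ub Hf Hg H0).
Qed.

Lemma DN_conv (f f1 f2 : X -> R) (g g1 g2 : Y -> R) a b :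
  is_dual f1 -> is_dual g1 -> is_dual f2 -> is_dual g2 ->
  (forall x, f x = a * f1 x + b * f2 x) -> (forall y, g y = a * g1 y + b * g2 y) ->
  dual_norm N f g <= `|a| * dual_norm N f1 g1 + `|b| * dual_norm N f2 g2.
Proof.
move=> H1 H2 H3 H4 Hf Hg; apply: ge_sup.
  by exists `|f 0 + g 0|, 0, 0; rewrite N00 ler01.
move=> r [x [y [Hxy ->]]].
rewrite Hf Hg.
have -> : a * f1 x + b * f2 x + (a * g1 y + b * g2 y) =
   a * (f1 x + g1 y) + b * (f2 x + g2 y) by ring.
apply: (le_trans (ler_normD _ _)); rewrite !normrM.
by apply: lerD; apply: ler_wpM2l => //; apply: DN_ub.
Qed.

Lemma DN_proj : exists K, 0 < K /\ forall u v, is_dual u -> is_dual v ->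
  dual_norm N u (@fzero R Y) <= K * dual_norm N u v /\
  dual_norm N (@fzero R X) v <= K * dual_norm N u v.
Proof.
case: HN => _ HZ _ [c [C [c0 C0 Hc]]].
have K0 : 0 < C / c by rewrite divr_gt0.
exists (C / c); split=> // u v Hu Hv.
have key : forall x y, N x y <= 1 -> N x 0 <= C / c /\ N 0 y <= C / c.
  move=> x y Hxy; have [H1 _] := Hc x y.
  have hm : Num.max `|x| `|y| <= c^-1.
    by rewrite -(ler_pM2l c0) mulfV ?gt_eqF //; apply: le_trans Hxy.
  have hx : `|x| <= c^-1 by apply: le_trans hm; rewrite le_max lexx.
  have hy : `|y| <= c^-1 by apply: le_trans hm; rewrite le_max lexx orbT.
  have [_ A] := Hc x 0; have [_ B] := Hc 0 y.
  rewrite normr0 in A; rewrite normr0 in B.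
  split.
    apply: (le_trans A); rewrite (_ : Num.max _ _ = `|x|); last first.
      by apply/max_idPl.
    by apply: ler_wpM2l => //; exact: ltW.
  apply: (le_trans B); rewrite (_ : Num.max _ _ = `|y|); last first.
    by apply/max_idPr.
  by apply: ler_wpM2l => //; exact: ltW.
have Ki : 0 < (C / c)^-1 by rewrite invr_gt0.
split; apply: ge_sup.
- by exists `|u 0 + 0|, 0, 0; rewrite N00 ler01.
- move=> r [x [y [Hxy ->]]]; rewrite /fzero addr0.
  have [k1 _] := key x y Hxy.
  have Hn : N ((C / c)^-1 *: x) ((C / c)^-1 *: 0) <= 1.
    by rewrite HZ gtr0_norm // -(ler_pM2l K0) mulrA mulfV ?gt_eqF // mul1r mulr1.
  have := DN_ub Hu Hv Hn; rewrite scaler0 dual0 // addr0 dualZ // normrM gtr0_norm //.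
  by rewrite -(ler_pM2l K0) mulrA mulfV ?gt_eqF // mul1r.
- by exists `|0 + v 0|, 0, 0; rewrite N00 ler01.
- move=> r [x [y [Hxy ->]]]; rewrite /fzero add0r.
  have [_ k1] := key x y Hxy.
  have Hn : N ((C / c)^-1 *: 0) ((C / c)^-1 *: y) <= 1.
    by rewrite HZ gtr0_norm // -(ler_pM2l K0) mulrA mulfV ?gt_eqF // mul1r mulr1.
  have := DN_ub Hu Hv Hn; rewrite scaler0 dual0 // add0r dualZ // normrM gtr0_norm //.
  by rewrite -(ler_pM2l K0) mulrA mulfV ?gt_eqF // mul1r.
Qed.


Lemma upper (xs : X -> R) (ys : Y -> R) (D : (X -> R) -> R) (KD : R) :
  is_dual xs -> is_dual ys ->
  dual_norm N xs (@fzero R Y) = 1 -> dual_norm N xs ys = 1 ->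
  (forall a h k, is_dual h -> is_dual k -> D (fadd (fscale a h) k) = a * D h + D k) ->
  (forall h, is_dual h -> `|D h| <= KD * dual_norm N h (@fzero R Y)) ->
  (forall eps, 0 < eps -> exists delta, 0 < delta /\ forall h, is_dual h ->
     dual_norm N h (@fzero R Y) < delta ->
     `|dual_norm N (fadd xs h) (@fzero R Y) - dual_norm N xs (@fzero R Y) - D h|
       <= eps * dual_norm N h (@fzero R Y)) ->
  (forall eps, 0 < eps -> exists delta, 0 < delta /\ forall h, is_dual h ->
     dual_norm N (@fzero R X) h < delta ->
     `|dual_norm N xs (fadd ys h) - dual_norm N xs ys - 0|
       <= eps * dual_norm N (@fzero R X) h) ->
  forall eps, 0 < eps -> exists delta, 0 < delta /\ forall h1 h2,
    is_dual h1 -> is_dual h2 -> dual_norm N h1 h2 < delta ->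
    dual_norm N (fadd xs h1) (fadd ys h2) - 1 - D h1 <= eps * dual_norm N h1 h2.
Proof.
move=> Hxs Hys H1 H2 HDlin HKD HDd Hpsi eps e0.
have [K [K0 HK]] := DN_proj.
have D0 : D (@fzero R X) = 0.
  have := HDlin 1 _ _ (dual_fzero X) (dual_fzero X).
  have -> : fadd (fscale 1 (@fzero R X)) (@fzero R X) = @fzero R X.
    by apply/funext => x; rewrite /fadd /fscale /fzero; ring.
  move=> H; lra.
have DZ : forall a h, is_dual h -> D (fscale a h) = a * D h.
  move=> a h Hh; have := HDlin a h _ Hh (dual_fzero X).
  rewrite D0 addr0 => <-; congr D.
  by apply/funext => x; rewrite /fadd /fzero addr0.
set Y0 := dual_norm N (@fzero R X) ys.
have Y00 : 0 <= Y0 by apply: DN_ge0 => //; exact: dual_fzero.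
pose e1 := eps / (2 * K).
have e10 : 0 < e1 by rewrite /e1 divr_gt0 // mulr_gt0.
have [d1 [d10 Hd1]] := HDd e1 e10.
pose eta := d1 / (2 * K).
have eta0 : 0 < eta by rewrite /eta divr_gt0 // mulr_gt0.
pose M := K + Y0 / eta.
have M0 : 0 < M.
  have : 0 <= Y0 / eta by rewrite divr_ge0 // ltW.
  rewrite /M; lra.
pose e2 := eps / (2 * M).
have e20 : 0 < e2 by rewrite /e2 divr_gt0 // mulr_gt0.
have [d2 [d20 Hd2]] := Hpsi e2 e20.
exists (Num.min (eta / 2) (d2 / (2 * M))); split.
  by rewrite lt_min; apply/andP; split; rewrite divr_gt0 // mulr_gt0.
move=> h1 h2 S1 S2; rewrite lt_min => /andP [ht1 ht2].
have t0 : 0 <= dual_norm N h1 h2 by apply: DN_ge0.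
set t := dual_norm N h1 h2 in t0 ht1 ht2 *.
have [ha hb] := HK h1 h2 S1 S2; rewrite -/t in ha hb.
have a0 : 0 <= dual_norm N h1 (@fzero R Y) by apply: DN_ge0 => //; exact: dual_fzero.
have b0 : 0 <= dual_norm N (@fzero R X) h2 by apply: DN_ge0 => //; exact: dual_fzero.
set a := dual_norm N h1 (@fzero R Y) in ha a0 *.
set b := dual_norm N (@fzero R X) h2 in hb b0 *.
have hD := HKD h1 S1; rewrite -/a ler_norml in hD; case/andP: hD => hD1 hD2.
case: (eqVneq t 0) => [tz | tnz].
  have az : a = 0 by apply/eqP; rewrite eq_le a0 andbT; rewrite tz mulr0 in ha.
  rewrite az mulr0 in hD1.
  have hc := DN_conv (a := 1) (b := 1) Hxs Hys S1 S2 (fun x => erefl) (fun y => erefl).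
  rewrite (_ : (fun x : X => 1 * xs x + 1 * h1 x) = fadd xs h1) in hc; last first.
    by apply/funext => x; rewrite /fadd !mul1r.
  rewrite (_ : (fun y : Y => 1 * ys y + 1 * h2 y) = fadd ys h2) in hc; last first.
    by apply/funext => x; rewrite /fadd !mul1r.
  rewrite normr1 !mul1r H2 -/t tz in hc.
  rewrite tz mulr0; lra.
have tp : 0 < t by rewrite lt_neqAle eq_sym tnz t0.
pose lam := t / eta.
have lam0 : 0 < lam by rewrite /lam divr_gt0.
have lameta : lam * eta = t by rewrite /lam divfK // gt_eqF.
have lamh : lam < 1 / 2 by nra.
have lamn0 : lam != 0 by rewrite gt_eqF.
have lam1 : 1 - lam != 0 by apply/eqP => H; lra.
pose hu := fscale lam^-1 h1.
have Shu : is_dual hu by apply: dual_fscale.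
have nhu : dual_norm N hu (@fzero R Y) <= lam^-1 * a.
  have := DN_conv (a := lam^-1) (b := 0) S1 (dual_fzero Y) S1 (dual_fzero Y)
    (f := hu) (g := @fzero R Y) _ _.
  rewrite normr0 mul0r addr0 gtr0_norm ?invr_gt0 //; apply.
    by move=> x; rewrite /hu /fscale mul0r addr0.
  by move=> y; rewrite /fzero !mulr0 addr0.
have li : lam^-1 * t = eta by rewrite /lam invf_div divfK // gt_eqF.
have Keta : K * eta = d1 / 2 by rewrite /eta; field; rewrite gt_eqF.
have hus : dual_norm N hu (@fzero R Y) < d1.
  apply: (le_lt_trans nhu).
  have : lam^-1 * a <= lam^-1 * (K * t) by apply: ler_wpM2l => //; rewrite invr_ge0 ltW.
  have -> : lam^-1 * (K * t) = K * (lam^-1 * t) by ring.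
  rewrite li Keta => H; lra.
have Hphi := Hd1 hu Shu hus.
rewrite H1 DZ // ler_norml in Hphi; case/andP: Hphi => _ Hphi.
pose il := (1 - lam)^-1.
have il0 : 0 < il by rewrite /il invr_gt0; lra.
have ilm : il * (1 - lam) = 1 by rewrite /il mulVf.
have il2 : il <= 2 by nra.
pose w := fscale il (fadd h2 (fscale lam ys)).
have Sw : is_dual w by apply/dual_fscale/dual_fadd => //; apply: dual_fscale.
have nw : dual_norm N (@fzero R X) w <= il * b + il * lam * Y0.
  have p1 : forall x, @fzero R X x = il * @fzero R X x + il * lam * @fzero R X x.
    by move=> x; rewrite /fzero !mulr0 addr0.
  have p2 : forall y, w y = il * h2 y + il * lam * ys y.
    by move=> y; rewrite /w /fscale /fadd; ring.
  have := DN_conv (dual_fzero X) S2 (dual_fzero X) Hys p1 p2.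
  by rewrite (gtr0_norm il0) (gtr0_norm (mulr_gt0 il0 lam0)) => H; exact: H.
have Yt : lam * Y0 = t * (Y0 / eta) by rewrite -lameta; field; rewrite gt_eqF.
have bY : b + lam * Y0 <= t * M by rewrite /M Yt; lra.
have ws : dual_norm N (@fzero R X) w < d2.
  apply: (le_lt_trans nw).
  have -> : il * b + il * lam * Y0 = il * (b + lam * Y0) by ring.
  have h1' : il * (b + lam * Y0) <= 2 * (t * M).
    apply: (le_trans (ler_wpM2l (ltW il0) bY)).
    by apply: ler_wpM2r => //; rewrite mulr_ge0 // ltW.
  apply: le_lt_trans h1' _.
  have : t * (2 * M) < d2 / (2 * M) * (2 * M) by rewrite ltr_pM2r // mulr_gt0.
  by rewrite divfK ?gt_eqF ?mulr_gt0 // => H; lra.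
have Hps := Hd2 w Sw ws.
rewrite H2 subr0 ler_norml in Hps; case/andP: Hps => _ Hps.
have q1 : forall x, fadd xs h1 x = lam * fadd xs hu x + (1 - lam) * xs x.
  by move=> x; rewrite /fadd /hu /fscale; field.
have q2 : forall y, fadd ys h2 y = lam * @fzero R Y y + (1 - lam) * fadd ys w y.
  by move=> y; rewrite /fadd /w /fscale /fzero /il /fadd /=; field.
have hc := DN_conv (dual_fadd Hxs Shu) (dual_fzero Y) Hxs (dual_fadd Hys Sw) q1 q2.
have l1 : 0 < 1 - lam by lra.
rewrite (gtr0_norm lam0) (gtr0_norm l1) in hc.
set P := dual_norm N (fadd xs hu) (@fzero R Y) in Hphi hc.
set Q := dual_norm N xs (fadd ys w) in Hps hc.
set W := dual_norm N (@fzero R X) w in nw ws Hps.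
set A := dual_norm N hu (@fzero R Y) in nhu Hphi.
have F2 : lam * P <= lam + D h1 + e1 * a.
  have : P <= 1 + lam^-1 * D h1 + e1 * (lam^-1 * a).
    have : e1 * A <= e1 * (lam^-1 * a) by apply: ler_wpM2l => //; exact: ltW.
    lra.
  move/(ler_wpM2l (ltW lam0)).
  have -> : lam * (1 + lam^-1 * D h1 + e1 * (lam^-1 * a)) = lam + D h1 + e1 * a.
    by field.
  by [].
have F3 : (1 - lam) * Q <= (1 - lam) + e2 * (b + lam * Y0).
  have : Q <= 1 + e2 * (il * (b + lam * Y0)).
    have : e2 * W <= e2 * (il * b + il * lam * Y0) by apply: ler_wpM2l => //; exact: ltW.
    have -> : il * (b + lam * Y0) = il * b + il * lam * Y0 by ring.
    lra.
  move/(ler_wpM2l (ltW l1)).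
  have -> : (1 - lam) * (1 + e2 * (il * (b + lam * Y0))) =
    (1 - lam) + e2 * (b + lam * Y0) * (il * (1 - lam)) by ring.
  by rewrite ilm mulr1.
have F4 : e1 * a <= eps * t / 2.
  have : e1 * a <= e1 * (K * t) by apply: ler_wpM2l => //; exact: ltW.
  have -> : e1 * (K * t) = eps * t / 2 by rewrite /e1; field; rewrite gt_eqF.
  by [].
have F5 : e2 * (b + lam * Y0) <= eps * t / 2.
  have : e2 * (b + lam * Y0) <= e2 * (t * M) by apply: ler_wpM2l => //; exact: ltW.
  have -> : e2 * (t * M) = eps * t / 2 by rewrite /e2; field; rewrite gt_eqF.
  by [].
lra.
Qed.

End Aux.

Lemma DlinZ (R : realType) (X : normedModType R) (D : (X -> R) -> R) :
  (forall a h k, is_dual h -> is_dual k -> D (fadd (fscale a h) k) = a * D h + D k) ->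
  forall a h, is_dual h -> D (fscale a h) = a * D h.
Proof.
move=> HDlin.
have D0 : D (@fzero R X) = 0.
  have := HDlin 1 _ _ (dual_fzero X) (dual_fzero X).
  have -> : fadd (fscale 1 (@fzero R X)) (@fzero R X) = @fzero R X.
    by apply/funext => x; rewrite /fadd /fscale /fzero; ring.
  move=> H; lra.
move=> a h Hh; have := HDlin a h _ Hh (dual_fzero X).
rewrite D0 addr0 => <-; congr D.
by apply/funext => x; rewrite /fadd /fzero addr0.
Qed.

Theorem lemma3p2 (R : realType) (X Y : completeNormedModType R)
  (N : X -> Y -> R) (xs : X -> R) (ys : Y -> R) :
  is_sum_norm N ->
  is_dual xs -> is_dual ys ->
  (* (i) *)
  dual_norm N xs (@fzero R Y) = 1 ->
  dual_norm N xs ys = 1 ->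
  (* (ii) u* |-> ||u*|| is Frechet differentiable at x* on X^* *)
  frechet_diff (@is_dual R X) (@fadd R X) (@fscale R X)
    (fun u => dual_norm N u (@fzero R Y))
    (fun u => dual_norm N u (@fzero R Y)) xs ->
  (* (iii) v* |-> ||x* + v*|| is Frechet differentiable at y* with derivative 0 *)
  frechet_deriv (@is_dual R Y) (@fadd R Y) (@fscale R Y)
    (fun v => dual_norm N (@fzero R X) v)
    (fun v => dual_norm N xs v) ys (fun _ => 0) ->
  (* conclusion: the dual norm is Frechet differentiable at x* + y* *)
  frechet_diff
    (fun p : (X -> R) * (Y -> R) => is_dual p.1 /\ is_dual p.2)
    (fun p q => (fadd p.1 q.1, fadd p.2 q.2))
    (fun a p => (fscale a p.1, fscale a p.2))
    (fun p => dual_norm N p.1 p.2)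
    (fun p => dual_norm N p.1 p.2) (xs, ys).
Proof.
move=> HN Hxs Hys H1 H2 [D [HDlin [KD HKD] HDd]] [_ _ Hpsi].
have [K [K0 HK]] := DN_proj HN.
exists (fun p => D p.1); split.
- by move=> a h k [Sh1 _] [Sk1 _] /=; exact: HDlin.
- exists (`|KD| * K) => -[h1 h2] [S1 S2] /=.
  apply: (le_trans (HKD h1 S1)).
  have [hk _] := HK h1 h2 S1 S2.
  have a0 : 0 <= dual_norm N h1 (@fzero R Y) by apply: DN_ge0 => //; exact: dual_fzero.
  apply: (le_trans (ler_wpM2r a0 (ler_norm KD))).
  rewrite -mulrA; apply: ler_wpM2l => //.
- move=> eps e0.
  have [d [d0 Hd]] := upper HN Hxs Hys H1 H2 HDlin HKD HDd Hpsi e0.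
  exists d; split=> // -[h1 h2] [S1 S2] /= ht.
  rewrite H2 ler_norml; apply/andP; split; last by apply: Hd.
  pose m1 := fscale (-1) h1; pose m2 := fscale (-1) h2.
  have Sm1 : is_dual m1 by apply: dual_fscale.
  have Sm2 : is_dual m2 by apply: dual_fscale.
  have tm : dual_norm N m1 m2 <= dual_norm N h1 h2.
    have p1 : forall x, m1 x = -1 * h1 x + 0 * h1 x.
      by move=> x; rewrite /m1 /fscale mul0r addr0.
    have p2 : forall y, m2 y = -1 * h2 y + 0 * h2 y.
      by move=> y; rewrite /m2 /fscale mul0r addr0.
    have := DN_conv HN S1 S2 S1 S2 p1 p2.
    by rewrite normrN normr1 normr0 mul0r addr0 mul1r.
  have Hm := Hd m1 m2 Sm1 Sm2 (le_lt_trans tm ht).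
  rewrite /m1 (DlinZ HDlin) // in Hm.
  have q1 : forall x, xs x = 1/2 * fadd xs h1 x + 1/2 * fadd xs m1 x.
    by move=> x; rewrite /fadd /m1 /fscale; field.
  have q2 : forall y, ys y = 1/2 * fadd ys h2 y + 1/2 * fadd ys m2 y.
    by move=> y; rewrite /fadd /m2 /fscale; field.
  have hc := DN_conv HN (dual_fadd Hxs S1) (dual_fadd Hys S2)
    (dual_fadd Hxs Sm1) (dual_fadd Hys Sm2) q1 q2.
  rewrite H2 (ger0_norm (_ : 0 <= 1/2)) in hc; last by rewrite divr_ge0.
  have : eps * dual_norm N m1 m2 <= eps * dual_norm N h1 h2.
    by apply: ler_wpM2l => //; exact: ltW.
  lra.
Qed.
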